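(* Let $(\mathcal C,\otimes,\mathbb I)$ be a monoidal category with pushouts and $(H,\Delta,\varepsilon)$ a coalgebra in $\mathcal C$. Let $(X,X\bullet H,\pi_X,\rho_X)$ be a geometric partial $H$-comodule, and consider the parallel comodule morphisms $\rho_X\otimes H,\ (\pi_X\otimes H)\circ(X\otimes\Delta):(X\otimes H,X\otimes\Delta)\to((X\bullet H)\otimes H,(X\bullet H)\otimes\Delta)$. Let $(Y,\delta)$ be a global $H$-comodule. Then the maps $$g\mapsto (g\otimes H)\circ\delta,\qquad f\mapsto (X\otimes\varepsilon)\circ f$$ are mutually inverse bijections between $\mathrm{Hom}_{\mathsf{PCom}^H}(\mathcal I(Y),X)$ and the set of comodule morphisms $f\in\mathrm{Hom}_{\mathsf{Com}^H}(Y,X\otimes H)$ satisfying $(\rho_X\otimes H)\circ f=(\pi_X\otimes H)\circ(X\otimes\Delta)\circ f$. This correspondence is natural in both $Y$ and $X$.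
   Context: $\mathcal C$ is treated as strict monoidal; the identity of an object $X$ is also written $X$. $\mathsf{Com}^H$ is the category of right $H$-comodules $(Y,\delta)$. A partial comodule datum is $(X,X\bullet H,\pi_X,\rho_X)$ with $\rho_X:X\to X\bullet H$ and $\pi_X:X\otimes H\to X\bullet H$ an epimorphism. For such a datum let: $(X\bullet H)\bullet H$ be the pushout of $\pi_X$ and $\rho_X\otimes H$, with coprojections $\rho_X\bullet H$ and $\pi_{X\bullet H}$; $X\bullet(H\otimes H)$ the pushout of $\pi_X$ and $X\otimes\Delta$, with coprojections $X\bullet\Delta$ and $\pi_{X,\Delta}:X\otimes H\otimes H\to X\bullet(H\otimes H)$; $X\bullet(H\bullet H)$ the pushout of $\pi_{X,\Delta}$ and $\pi_X\otimes H$, with coprojections $\pi'_X$ and $\pi'_{X,\Delta}$. A geometric partial $H$-comodule is a datum such that (GP1) there is $X\bullet\varepsilon:X\bullet H\to X$ with $(X\bullet\varepsilon)\circ\rho_X=\mathrm{id}_X$ and $(X\bullet\varepsilon)\circ\pi_X=X\otimes\varepsilon$; (GP2) there is an isomorphism $\theta:X\bullet(H\bullet H)\to(X\bullet H)\bullet H$ with $\theta\circ\pi'_{X,\Delta}=\pi_{X\bullet H}$ and $(\rho_X\bullet H)\circ\rho_X=\theta\circ\pi'_X\circ(X\bullet\Delta)\circ\rho_X$. Morphisms $X\to X'$ are pairs $(f,f\bullet H)$ with $\rho_{X'}\circ f=(f\bullet H)\circ\rho_X$ and $\pi_{X'}\circ(f\otimes H)=(f\bullet H)\circ\pi_X$ (determined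 by $f$); category $\mathsf{PCom}^H$. A global comodule $(Y,\delta)$ gives $\mathcal I(Y)=(Y,Y\otimes H,\mathrm{id},\delta)$; a morphism $\mathcal I(Y)\to X$ is a morphism $g:Y\to X$ in $\mathcal C$ with $\pi_X\circ(g\otimes H)\circ\delta=\rho_X\circ g$. *)

(* Defs.v *)
Set Implicit Arguments.
Unset Strict Implicit.

Reserved Notation "g ∘ f" (at level 40, left associativity).
Reserved Notation "a ⊗ b" (at level 30, right associativity).
Reserved Notation "f <x> g" (at level 30, right associativity).

(** The paper treats C as strict; we keep explicit coherence isomorphisms
    (associator and unitors, satisfying naturality, pentagon and triangle),
    which is equivalent by Mac Lane's coherence/strictification theorem. *)
Record MonCat := {
  ob :> Type;
  hom : ob -> ob -> Type;
  idm : forall a, hom a a;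
  comp : forall a b c, hom b c -> hom a b -> hom a c;
  comp_idl : forall a b (f : hom a b), comp (idm b) f = f;
  comp_idr : forall a b (f : hom a b), comp f (idm a) = f;
  comp_assoc : forall a b c d (f : hom a b) (g : hom b c) (h : hom c d),
      comp h (comp g f) = comp (comp h g) f;
  tens : ob -> ob -> ob;
  tensm : forall a a' b b', hom a a' -> hom b b' -> hom (tens a b) (tens a' b');
  tensm_id : forall a b, tensm (idm a) (idm b) = idm (tens a b);
  tensm_comp : forall a a' a'' b b' b'' (f : hom a a') (f' : hom a' a'')
      (g : hom b b') (g' : hom b' b''),
      tensm (comp f' f) (comp g' g) = comp (tensm f' g') (tensm f g);
  unit : ob;
  assoc : forall a b c, hom (tens (tens a b) c) (tens a (tens b c));
  associ : forall a b c, hom (tens a (tens b c)) (tens (tens a b) c);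
  assoc_iso1 : forall a b c, comp (associ a b c) (assoc a b c) = idm _;
  assoc_iso2 : forall a b c, comp (assoc a b c) (associ a b c) = idm _;
  assoc_nat : forall a a' b b' c c' (f : hom a a') (g : hom b b') (h : hom c c'),
      comp (assoc a' b' c') (tensm (tensm f g) h)
      = comp (tensm f (tensm g h)) (assoc a b c);
  lunit : forall a, hom (tens unit a) a;
  luniti : forall a, hom a (tens unit a);
  lunit_iso1 : forall a, comp (luniti a) (lunit a) = idm _;
  lunit_iso2 : forall a, comp (lunit a) (luniti a) = idm _;
  lunit_nat : forall a b (f : hom a b),
      comp (lunit b) (tensm (idm unit) f) = comp f (lunit a);
  runit : forall a, hom (tens a unit) a;
  runiti : forall a, hom a (tens a unit);
  runit_iso1 : forall a, comp (runiti a) (runit a) = idm _;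
  runit_iso2 : forall a, comp (runit a) (runiti a) = idm _;
  runit_nat : forall a b (f : hom a b),
      comp (runit b) (tensm f (idm unit)) = comp f (runit a);
  pentagon : forall a b c d,
      comp (tensm (idm a) (assoc b c d))
           (comp (assoc a (tens b c) d) (tensm (assoc a b c) (idm d)))
      = comp (assoc a b (tens c d)) (assoc (tens a b) c d);
  triangle : forall a b,
      comp (tensm (idm a) (lunit b)) (assoc a unit b)
      = tensm (runit a) (idm b)
}.

Arguments hom {m} _ _.
Arguments idm {m} _.
Arguments comp {m a b c} _ _.
Arguments tens {m} _ _.
Arguments tensm {m a a' b b'} _ _.
Arguments unit {m}.
Arguments assoc {m} _ _ _.
Arguments associ {m} _ _ _.
Arguments lunit {m} _.
Arguments luniti {m} _.
Arguments runit {m} _.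
Arguments runiti {m} _.

Notation "g ∘ f" := (comp g f).
Notation "a ⊗ b" := (tens a b).
Notation "f <x> g" := (tensm f g).

Definition is_epi (C : MonCat) (a b : C) (f : hom a b) : Prop :=
  forall d (u v : hom b d), u ∘ f = v ∘ f -> u = v.

Definition is_iso (C : MonCat) (a b : C) (f : hom a b) : Prop :=
  exists g : hom b a, g ∘ f = idm a /\ f ∘ g = idm b.

Record Pushouts (C : MonCat) := {
  po : forall a b c : C, hom a b -> hom a c -> C;
  po_inl : forall a b c (f : hom a b) (g : hom a c), hom b (po f g);
  po_inr : forall a b c (f : hom a b) (g : hom a c), hom c (po f g);
  po_comm : forall a b c (f : hom a b) (g : hom a c),
      po_inl f g ∘ f = po_inr f g ∘ g;
  po_univ : forall a b c (f : hom a b) (g : hom a c) d (u : hom b d) (v : hom c d),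
      u ∘ f = v ∘ g ->
      exists! w : hom (po f g) d, w ∘ po_inl f g = u /\ w ∘ po_inr f g = v
}.
Arguments po {C} _ {a b c} _ _.
Arguments po_inl {C} _ {a b c} _ _.
Arguments po_inr {C} _ {a b c} _ _.

Record Coalg (C : MonCat) := {
  cH : C;
  cDelta : hom cH (cH ⊗ cH);
  ceps : hom cH unit;
  coassoc : assoc cH cH cH ∘ (cDelta <x> idm cH) ∘ cDelta = (idm cH <x> cDelta) ∘ cDelta;
  counit_l : lunit cH ∘ (ceps <x> idm cH) ∘ cDelta = idm cH;
  counit_r : runit cH ∘ (idm cH <x> ceps) ∘ cDelta = idm cH
}.
Arguments cH {C} _.
Arguments cDelta {C} _.
Arguments ceps {C} _.

Section Comod.
Context {C : MonCat} (K : Coalg C).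
Local Notation H := (cH K).
Local Notation Δ := (cDelta K).
Local Notation ε := (ceps K).

Definition is_comodule (Y : C) (δ : hom Y (Y ⊗ H)) : Prop :=
  assoc Y H H ∘ (δ <x> idm H) ∘ δ = (idm Y <x> Δ) ∘ δ /\
  runit Y ∘ (idm Y <x> ε) ∘ δ = idm Y.

Definition comod_hom (Y Y' : C) (δ : hom Y (Y ⊗ H)) (δ' : hom Y' (Y' ⊗ H))
  (f : hom Y Y') : Prop :=
  δ' ∘ f = (f <x> idm H) ∘ δ.

Definition cofree (X : C) : hom (X ⊗ H) ((X ⊗ H) ⊗ H) :=
  associ X H H ∘ (idm X <x> Δ).

Record PDatum := {
  pX : C;
  pXH : C;
  ppi : hom (pX ⊗ H) pXH;
  prho : hom pX pXH;
  ppi_epi : is_epi ppi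
}.

(** Geometric partial comodule: axioms (GP1) and (GP2), with the pushouts
    (X•H)•H, X•(H⊗H), X•(H•H) taken from the chosen pushouts. *)
Definition is_geometric (P : Pushouts C) (D : PDatum) : Prop :=
  let X := pX D in
  let pi := ppi D in
  let rho := prho D in
  let rhoH := po_inl P pi (rho <x> idm H) in
  let piXH := po_inr P pi (rho <x> idm H) in
  let XDel := po_inl P pi (idm X <x> Δ) in
  let piXDel := po_inr P pi (idm X <x> Δ) in
  let pi'X := po_inl P piXDel ((pi <x> idm H) ∘ associ X H H) in
  let pi'XDel := po_inr P piXDel ((pi <x> idm H) ∘ associ X H H) in
  (exists e : hom (pXH D) X,
      e ∘ rho = idm X /\ e ∘ pi = runit X ∘ (idm X <x> ε)) /\
  (exists θ : hom (po P piXDel ((pi <x> idm H) ∘ associ X H H))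
                  (po P pi (rho <x> idm H)),
      is_iso θ /\ θ ∘ pi'XDel = piXH /\
      rhoH ∘ rho = θ ∘ pi'X ∘ XDel ∘ rho).

Definition pcom_hom (D D' : PDatum) (f : hom (pX D) (pX D'))
  (fH : hom (pXH D) (pXH D')) : Prop :=
  prho D' ∘ f = fH ∘ prho D /\ ppi D' ∘ (f <x> idm H) = fH ∘ ppi D.

Lemma idm_epi (a : C) : is_epi (idm a).
Proof. intros d u v E. rewrite !comp_idr in E. exact E. Qed.

Definition Iof (Y : C) (δ : hom Y (Y ⊗ H)) : PDatum :=
  {| pX := Y; pXH := Y ⊗ H; ppi := idm (Y ⊗ H); prho := δ;
     ppi_epi := @idm_epi (Y ⊗ H) |}.

Definition pcomI_hom (Y : C) (δ : hom Y (Y ⊗ H)) (D : PDatum) (g : hom Y (pX D)) : Prop :=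
  exists gH : hom (Y ⊗ H) (pXH D), @pcom_hom (Iof δ) D g gH.

Definition eq_set (Y : C) (δ : hom Y (Y ⊗ H)) (D : PDatum) (f : hom Y (pX D ⊗ H)) : Prop :=
  comod_hom δ (cofree (pX D)) f /\
  (prho D <x> idm H) ∘ f = (ppi D <x> idm H) ∘ associ (pX D) H H ∘ (idm (pX D) <x> Δ) ∘ f.

Definition Phi (Y : C) (δ : hom Y (Y ⊗ H)) (X : C) (g : hom Y X) : hom Y (X ⊗ H) :=
  (g <x> idm H) ∘ δ.

Definition Psi (Y X : C) (f : hom Y (X ⊗ H)) : hom Y X :=
  runit X ∘ (idm X <x> ε) ∘ f.

End Comod.

Arguments is_comodule {C K Y} δ.
Arguments comod_hom {C K Y Y'} δ δ' f.
Arguments pcom_hom {C K} D D' f fH.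
Arguments pcomI_hom {C K Y} δ D g.
Arguments eq_set {C K Y} δ D f.
Arguments Phi {C K Y} δ {X} g.
Arguments Psi {C K Y X} f.
Arguments is_geometric {C K} P D.

(* Main.v *)
Require Import Defs.

Section Gen.
Context {C : MonCat}.

Lemma c2 {a b c d : C} (f : hom a b) (g : hom b c) (h : hom a c) (k : hom d a) :
  g ∘ f = h -> g ∘ (f ∘ k) = h ∘ k.
Proof. intros E. rewrite comp_assoc, E. reflexivity. Qed.

Lemma tens_idl {a a' a'' b : C} (f : hom a a') (f' : hom a' a'') :
  (f' ∘ f) <x> idm b = (f' <x> idm b) ∘ (f <x> idm b).
Proof. rewrite <- tensm_comp, comp_idl. reflexivity. Qed.

Lemma tens_idr {a b b' b'' : C} (f : hom b b') (f' : hom b' b'') :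
  idm a <x> (f' ∘ f) = (idm a <x> f') ∘ (idm a <x> f).
Proof. rewrite <- tensm_comp, comp_idl. reflexivity. Qed.

Lemma swap1 {a a' b b' : C} (f : hom a a') (g : hom b b') :
  (idm a' <x> g) ∘ (f <x> idm b) = (f <x> idm b') ∘ (idm a <x> g).
Proof. rewrite <- !tensm_comp, !comp_idl, !comp_idr. reflexivity. Qed.

Lemma associ_nat {a a' b b' c c' : C} (f : hom a a') (g : hom b b') (h : hom c c') :
  associ a' b' c' ∘ (f <x> (g <x> h)) = ((f <x> g) <x> h) ∘ associ a b c.
Proof.
  rewrite <- (comp_idr (associ a' b' c' ∘ _)).
  rewrite <- (assoc_iso2 a b c).
  rewrite !comp_assoc. rewrite <- (comp_assoc _ (f <x> (g <x> h))).
  rewrite <- assoc_nat. rewrite !comp_assoc. rewrite assoc_iso1, comp_idl. reflexivity.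
Qed.

Lemma triangle_i (a b : C) : (runit a <x> idm b) ∘ associ a unit b = idm a <x> lunit b.
Proof.
  rewrite <- triangle. rewrite <- comp_assoc, assoc_iso2, comp_idr. reflexivity.
Qed.

End Gen.
Ltac ra := repeat rewrite <- comp_assoc.
Ltac rw E := first [rewrite (c2 _ _ _ _ E) | rewrite E]; ra.

Section P.
Context {C : MonCat} (K : Coalg C).
Local Notation H := (cH K).
Local Notation Δ := (cDelta K).
Local Notation ε := (ceps K).

Lemma phi_comod (Y X : C) (δ : hom Y (Y ⊗ H)) (HY : is_comodule δ) (g : hom Y X) :
  comod_hom δ (cofree K X) (Phi δ g).
Proof.
  destruct HY as [HY1 HY2]. unfold comod_hom, cofree, Phi. ra.
  rw (swap1 g Δ).
  rw (eq_sym HY1).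
  rewrite <- (tensm_id H H).
  rw (eq_sym (assoc_nat g (idm H) (idm H))).
  rw (assoc_iso1 X H H). rewrite comp_idl.
  rewrite tens_idl. ra. reflexivity.
Qed.
End P.

Section P.
Context {C : MonCat} (K : Coalg C).
Local Notation H := (cH K).
Local Notation Δ := (cDelta K).
Local Notation ε := (ceps K).

Lemma part1 (D : PDatum K) (Y : C) (δ : hom Y (Y ⊗ H)) (HY : is_comodule δ) g :
  pcomI_hom δ D g -> eq_set δ D (Phi δ g).
Proof.
  intros [gH [E1 E2]]. simpl in *. rewrite comp_idr in E2. subst gH.
  split. apply phi_comod; auto.
  pose proof (@phi_comod C K _ _ _ HY g) as Hc. unfold comod_hom, cofree in Hc.
  ra. rewrite <- comp_assoc in Hc. rewrite Hc.
  unfold Phi. ra. rewrite (c2 _ _ _ _ (eq_sym (tens_idl g (prho D)))). rewrite E1. rewrite !tens_idl. ra. reflexivity.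
Qed.

Lemma part3 (X Y : C) (δ : hom Y (Y ⊗ H)) (HY : is_comodule δ) (g : hom Y X) :
  Psi (Phi δ g) = g.
Proof.
  destruct HY as [_ HY2]. unfold Psi, Phi. ra.
  rw (swap1 g ε). rw (runit_nat g). repeat rewrite <- comp_assoc in HY2. rewrite HY2, comp_idr. reflexivity.
Qed.

Lemma part4 (X Y : C) (δ : hom Y (Y ⊗ H)) (f : hom Y (X ⊗ H)) :
  comod_hom δ (cofree K X) f -> Phi δ (Psi f) = f.
Proof.
  intros Hc. unfold comod_hom, cofree in Hc. unfold Psi, Phi.
  rewrite !tens_idl. ra. rewrite <- comp_assoc in Hc. rewrite <- Hc. ra.
  rw (eq_sym (associ_nat (idm X) ε (idm H))).
  rw (triangle_i X H).
  rw (eq_sym (@tens_idr _ X _ _ _ (ε <x> idm H) (lunit H))).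
  rw (eq_sym (@tens_idr _ X _ _ _ Δ (lunit H ∘ ε <x> idm H))).
  pose proof (counit_l K) as Cl. repeat rewrite <- comp_assoc in Cl. rewrite Cl, tensm_id, comp_idl. reflexivity.
Qed.

Lemma part2 (D : PDatum K) (Y : C) (δ : hom Y (Y ⊗ H)) (HY : is_comodule δ) f :
  eq_set δ D f -> pcomI_hom δ D (Psi f).
Proof.
  intros [Hc He]. exists (ppi D ∘ (Psi f <x> idm H)). split; simpl.
  2: rewrite comp_idr; reflexivity.
  rewrite <- comp_assoc. fold (Phi δ (Psi f)). rewrite part4 by exact Hc.
  destruct HY as [_ HY2]. unfold comod_hom, cofree in Hc.
  unfold Psi. ra.
  rw (eq_sym (runit_nat (prho D))).
  rewrite (c2 _ _ _ _ (eq_sym (swap1 (prho D) ε))); ra.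
  repeat rewrite <- comp_assoc in He. rewrite He.
  rewrite (c2 _ _ _ _ (swap1 (ppi D) ε)); ra. rw (runit_nat (ppi D)).
  rewrite <- comp_assoc in Hc. rewrite Hc. ra.
  rewrite (c2 _ _ _ _ (swap1 f ε)); ra. rewrite (c2 _ _ _ _ (runit_nat f)); ra. repeat rewrite <- comp_assoc in HY2. rewrite HY2, comp_idr. reflexivity.
Qed.
End P.

Theorem lemma3p3 (C : MonCat) (P : Pushouts C) (K : Coalg C)
  (D : PDatum K) (HD : is_geometric P D)
  (Y : C) (δ : hom Y (Y ⊗ cH K)) (HY : is_comodule δ) :
  (* the two maps land in the right sets *)
  (forall g : hom Y (pX D), pcomI_hom δ D g -> eq_set δ D (Phi δ g)) /\
  (forall f : hom Y (pX D ⊗ cH K), eq_set δ D f -> pcomI_hom δ D (Psi f)) /\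
  (* they are mutually inverse *)
  (forall g : hom Y (pX D), pcomI_hom δ D g -> Psi (Phi δ g) = g) /\
  (forall f : hom Y (pX D ⊗ cH K), eq_set δ D f -> Phi δ (Psi f) = f) /\
  (* naturality in Y *)
  (forall (Y' : C) (δ' : hom Y' (Y' ⊗ cH K)) (h : hom Y' Y),
      is_comodule δ' -> comod_hom δ' δ h ->
      (forall g : hom Y (pX D), pcomI_hom δ D g -> Phi δ' (g ∘ h) = Phi δ g ∘ h) /\
      (forall f : hom Y (pX D ⊗ cH K), eq_set δ D f -> Psi (f ∘ h) = Psi f ∘ h)) /\
  (* naturality in X *)
  (forall (D' : PDatum K) (k : hom (pX D) (pX D')) (kH : hom (pXH D) (pXH D')),
      is_geometric P D' -> pcom_hom D D' k kH ->
      (forall g : hom Y (pX D), pcomI_hom δ D g ->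
          Phi δ (k ∘ g) = (k <x> idm (cH K)) ∘ Phi δ g) /\
      (forall f : hom Y (pX D ⊗ cH K), eq_set δ D f ->
          Psi ((k <x> idm (cH K)) ∘ f) = k ∘ Psi f)).
Proof.
  split; [intros g Hg; apply part1; auto|].
  split; [intros f Hf; apply part2; auto|].
  split; [intros g Hg; apply part3; auto|].
  split; [intros f Hf; apply part4; destruct Hf; auto|].
  split.
  - intros Y' δ' h _ Hh. split.
    + intros g _. unfold Phi. rewrite tens_idl. ra. unfold comod_hom in Hh.
      rewrite Hh. reflexivity.
    + intros f _. unfold Psi. rewrite !comp_assoc. reflexivity.
  - intros D' k kH _ _. split.
    + intros g _. unfold Phi. rewrite tens_idl. ra. reflexivity.
    + intros f _. unfold Psi. ra.
      rewrite (c2 _ _ _ _ (swap1 k (ceps K))); ra.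
      rewrite (c2 _ _ _ _ (runit_nat k)); ra. reflexivity.
Qed.
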